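(* Fix $\delta>0$ and privacy levels $\epsilon_1,\dots,\epsilon_n>0$. Let $\mathcal{P}=\{(s,c,q): s\in(0,2),\ c>0,\ q\in(|s-1|,1)\}$ and $$J(\{s_i,c_i,q_i\}_{i=1}^n)=\frac{2}{n^2}\sum_{i=1}^n\frac{s_i^2c_i^2}{1-q_i^2}.$$ Then the infimum of $J$ over all $\{(s_i,c_i,q_i)\}_{i=1}^n\in\mathcal{P}^n$ satisfying the privacy constraints $\epsilon_i=\delta\frac{q_i}{c_i(q_i-|s_i-1|)}$ for all $i$ (equivalently $c_i=\delta\frac{q_i}{\epsilon_i(q_i-|s_i-1|)}$) equals $$J^*=\frac{2\delta^2}{n^2}\sum_{i=1}^n\frac{1}{\epsilon_i^2}.$$ This infimum is not attained on the constraint set, and it is approached by taking $s_i=1$, $c_i=\delta q_i/(\epsilon_i(q_i-|s_i-1|))$, and $q_i\to0$ for all $i$.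
   Context: $J$ equals the variance of the consensus point $\theta_\infty$ of the Laplacian differentially private consensus algorithm $\theta(k+1)=\theta(k)-hLx(k)+S\eta(k)$, $x(k)=\theta(k)+\eta(k)$, $S=\mathrm{diag}(s_i)$, $\eta_i(k)\sim\mathrm{Lap}(c_iq_i^k)$ independent, and $\epsilon_i=\delta q_i/(c_i(q_i-|s_i-1|))$ is the differential privacy level of agent $i$ for adjacency bound $\delta$. *)

(* Defs.v *)
(* the statement is purely order-algebraic over an ordered field. *)
From HB Require Import structures.
From mathcomp Require Import all_boot all_order all_algebra.
Set Implicit Arguments. Unset Strict Implicit. Unset Printing Implicit Defensive.
Import Order.TTheory GRing.Theory Num.Theory.
Local Open Scope ring_scope.

Definition inP (R : realFieldType) (s c q : R) : Prop :=
  [/\ 0 < s < 2, 0 < c & `|s - 1| < q < 1].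

Definition dp_level (R : realFieldType) (delta s c q : R) : R :=
  delta * q / (c * (q - `|s - 1|)).

Definition Jcost (R : realFieldType) (n : nat) (s c q : 'I_n -> R) : R :=
  2 / (n%:R ^+ 2) * \sum_(i < n) (s i ^+ 2 * c i ^+ 2 / (1 - q i ^+ 2)).

Definition Jstar (R : realFieldType) (n : nat) (delta : R) (eps : 'I_n -> R) : R :=
  2 * delta ^+ 2 / (n%:R ^+ 2) * \sum_(i < n) (eps i ^+ 2)^-1.

Definition feasible (R : realFieldType) (n : nat) (delta : R) (eps : 'I_n -> R)
  (s c q : 'I_n -> R) : Prop :=
  forall i, inP (s i) (c i) (q i) /\ eps i = dp_level delta (s i) (c i) (q i).

(* Main.v *)
Require Import Defs.
From HB Require Import structures.
From mathcomp Require Import all_boot all_order all_algebra.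
From mathcomp Require Import ring lra.
Import Order.TTheory GRing.Theory Num.Theory.
Local Open Scope ring_scope.

Lemma key (R : realFieldType) (s a q : R) : 0 <= a -> a < q -> q < 1 -> 0 < s -> 1 - a <= s ->
  (q-a)^+2 * (1 - q^+2) < s^+2 * q^+2.
Proof.
move=> ha haq hq hs hsa.
have h1 : 0 < q - a by lra.
have h2 : q - a <= (1-a)*q by nra.
have h3 : (1-a)*q <= s * q by nra.
have h4 : (q-a)^+2 * (1 - q^+2) < (q-a)^+2 by rewrite -{2}(mulr1 ((q-a)^+2)) ltr_pM2l ?exprn_gt0 //; nra.
apply: (lt_le_trans h4). rewrite -exprMn. nra.
Qed.
Lemma term (R : realFieldType) (d e s c q : R) : 0 < d -> 0 < e -> inP s c q ->
  e = dp_level d s c q -> d^+2 * (e^+2)^-1 < s^+2 * c^+2 / (1 - q^+2).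
Proof.
move=> hd he [/andP[hs0 hs2] hc /andP[haq hq]] He.
set a := `|s - 1| in haq He.
have ha : 0 <= a by rewrite normr_ge0.
have hsa : 1 - a <= s.
  have : -(s-1) <= a by rewrite /a -normrN ler_norm.
  lra.
have hqa : 0 < q - a by lra.
have hid : e * (c * (q - a)) = d * q.
  by rewrite He /dp_level divfK // mulf_neq0 // gt_eqF.
have hk := @key R _ _ _ ha haq hq hs0 hsa.
have h1q : 0 < 1 - q^+2 by nra.
rewrite ltr_pdivlMr // mulrAC ltr_pdivrMr ?exprn_gt0 //.
rewrite -(ltr_pM2r (exprn_gt0 2 hqa)).
have -> : s ^+ 2 * c ^+ 2 * e ^+ 2 * (q - a) ^+ 2 = s^+2 * (e * (c * (q - a)))^+2 by ring.
rewrite hid.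
have hd2 : 0 < d^+2 by rewrite exprn_gt0.
have H : d^+2 * ((q-a)^+2 * (1 - q^+2)) < d^+2 * (s^+2 * q^+2) by rewrite ltr_pM2l.
have -> : d ^+ 2 * (1 - q ^+ 2) * (q - a) ^+ 2 = d^+2 * ((q - a) ^+ 2 * (1 - q ^+ 2)) by ring.
apply: (lt_le_trans H). rewrite le_eqVlt; apply/orP; left; apply/eqP; ring.
Qed.

Lemma JstarE (R : realFieldType) (n : nat) (delta : R) (eps : 'I_n -> R) :
  Jstar delta eps = 2 / (n%:R ^+ 2) * \sum_(i < n) (delta^+2 * (eps i ^+ 2)^-1).
Proof. rewrite /Jstar -mulr_sumr; ring. Qed.

Lemma term1 (R : realFieldType) (d e q : R) : 0 < e -> 0 < q < 1 ->
  1 ^+ 2 * (d * q / (e * (q - `|1 - 1|))) ^+ 2 / (1 - q ^+ 2)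
  = d^+2 * (e^+2)^-1 + d^+2 * (e^+2)^-1 * (q^+2 / (1 - q^+2)).
Proof.
move=> he /andP[hq0 hq1].
rewrite subrr normr0 subr0.
have h1 : 1 - q^+2 != 0 by apply/lt0r_neq0; nra.
field. rewrite h1 gt_eqF // gt_eqF //.
Qed.

Theorem mainTheorem7 (R : realFieldType) (n : nat) (delta : R) (eps : 'I_n -> R) :
  (0 < n)%N -> 0 < delta -> (forall i, 0 < eps i) ->
  (forall s c q : 'I_n -> R, feasible delta eps s c q -> Jstar delta eps < Jcost s c q)
  /\ (forall e : R, 0 < e -> exists s c q : 'I_n -> R,
        feasible delta eps s c q /\ Jcost s c q < Jstar delta eps + e)
  /\ (forall q : 'I_n -> R, (forall i, 0 < q i < 1) ->
        feasible delta eps (fun _ => 1)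
          (fun i => delta * q i / (eps i * (q i - `|1 - 1|))) q)
  /\ (forall e : R, 0 < e -> exists d : R, 0 < d /\
        forall q : 'I_n -> R, (forall i, 0 < q i < d) ->
          `| Jcost (fun _ => 1) (fun i => delta * q i / (eps i * (q i - `|1 - 1|))) q
             - Jstar delta eps | < e).
Proof.
move=> hn hd he.
have hc : 0 < 2 / (n%:R ^+ 2) :> R by rewrite divr_gt0 // exprn_gt0 // ltr0n.
have hA : forall i, 0 < delta^+2 * (eps i ^+ 2)^-1.
  by move=> i; rewrite divr_gt0 // exprn_gt0.
have hK : 0 < Jstar delta eps.
  rewrite JstarE mulr_gt0 //. rewrite (bigD1 (Ordinal hn)) //=.
  apply: (lt_le_trans (hA (Ordinal hn))); rewrite lerDl sumr_ge0 // => i _; exact: ltW.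
have P3 : forall q : 'I_n -> R, (forall i, 0 < q i < 1) ->
        feasible delta eps (fun _ => 1)
          (fun i => delta * q i / (eps i * (q i - `|1 - 1|))) q.
  move=> q hq i; have /andP[hq0 hq1] := hq i.
  rewrite /inP /dp_level subrr normr0 subr0; split; first split.
  - by apply/andP; split; lra.
  - by rewrite divr_gt0 ?mulr_gt0.
  - by apply/andP; split.
  - field. by rewrite !gt_eqF.
have P4 : forall e : R, 0 < e -> exists d : R, 0 < d /\
        forall q : 'I_n -> R, (forall i, 0 < q i < d) ->
          `| Jcost (fun _ => 1) (fun i => delta * q i / (eps i * (q i - `|1 - 1|))) q
             - Jstar delta eps | < e.
  move=> e e0.
  set K := Jstar delta eps.
  exists (Num.min (2^-1) (e / (2 * K))).
  have hm : 0 < Num.min (2^-1) (e / (2 * K)).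
    by rewrite lt_min invr_gt0 ltr0n /= divr_gt0 // mulr_gt0.
  split => // q hq.
  set d := Num.min _ _ in hm hq.
  have hd2 : d <= 2^-1 by rewrite ge_min lexx.
  have hdK : d <= e / (2 * K) by rewrite ge_min lexx orbT.
  rewrite /Jcost.
  have hq' : forall i, 0 < q i < 1.
    by move=> i; have /andP[? ?] := hq i; apply/andP; split => //; lra.
  under eq_bigr => i _ do rewrite (@term1 R delta (eps i) (q i) (he i) (hq' i)).
  rewrite big_split /= mulrDr -JstarE -/K addrC addKr.
  have hr : forall i, 0 <= q i ^+ 2 / (1 - q i ^+ 2) <= d.
    move=> i; have /andP[h0 h1] := hq i.
    have h1q : 0 < 1 - q i ^+ 2 by nra.
    by rewrite divr_ge0 ?ler_pdivrMr //=; [nra|nra|lra].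
  have hX0 : 0 <= \sum_(i < n) delta ^+ 2 * (eps i ^+ 2)^-1 * (q i ^+ 2 / (1 - q i ^+ 2)).
    apply: sumr_ge0 => i _; rewrite mulr_ge0 ?(ltW (hA i)) //; by case/andP: (hr i).
  have hXle : \sum_(i < n) delta ^+ 2 * (eps i ^+ 2)^-1 * (q i ^+ 2 / (1 - q i ^+ 2))
     <= \sum_(i < n) delta ^+ 2 * (eps i ^+ 2)^-1 * d.
    apply: ler_sum => i _; rewrite ler_pM2l ?hA //; by case/andP: (hr i).
  have hdK' : d * K <= e / 2.
    have H : d * K <= e / (2 * K) * K by rewrite ler_pM2r.
    apply: (le_trans H).
    rewrite le_eqVlt; apply/orP; left; apply/eqP; field; by rewrite gt_eqF.
  rewrite ger0_norm; last by rewrite mulr_ge0 // ltW.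
  apply: (le_lt_trans (y := d * K)); last by lra.
  rewrite -mulr_suml in hXle.
  rewrite /K JstarE.
  have -> : d * (2 / n%:R ^+ 2 * \sum_(i < n) delta ^+ 2 * (eps i ^+ 2)^-1) =
     2 / n%:R ^+ 2 * ((\sum_(i < n) delta ^+ 2 * (eps i ^+ 2)^-1) * d) by ring.
  by rewrite ler_pM2l.
split; [|split; [|split; [exact: P3|exact: P4]]].
- move=> s c q hf; rewrite JstarE /Jcost ltr_pM2l //.
  apply: ltr_sum; first by apply/hasP; exists (Ordinal hn); [exact: mem_index_enum|].
  move=> i _; case: (hf i) => hi Hi; exact: (@term R _ _ _ _ _ hd (he i) hi Hi).
- move=> e e0; have [d [d0 Hd]] := P4 e e0.
  set m := Num.min (d / 2) (2^-1).
  have hm0 : 0 < m by rewrite lt_min divr_gt0 // invr_gt0 ltr0n.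
  have hm1 : m <= 2^-1 by rewrite ge_min lexx orbT.
  have hmd : m <= d / 2 by rewrite ge_min lexx.
  have hq : forall i : 'I_n, 0 < (fun _ => m) i < 1 by move=> i; apply/andP; split => //=; clear -hm0 hm1 hmd d0; lra.
  have hq2 : forall i : 'I_n, 0 < (fun _ => m) i < d by move=> i; apply/andP; split => //=; clear -hm0 hm1 hmd d0; lra.
  exists (fun _ => 1), (fun i => delta * m / (eps i * (m - `|1 - 1|))), (fun _ => m).
  split; first exact: (P3 _ hq).
  have H := Hd _ hq2.
  have := ler_norm (Jcost (fun=> 1) (fun i : 'I_n => delta * m / (eps i * (m - `|1 - 1|))) (fun=> m) - Jstar delta eps).
  move=> H2; clear -H H2; lra.
Qed.
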